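(* Let $\mathcal{R}_1, \mathcal{R}_2$ be families of ranges and let $k,m$ be positive integers. Suppose that we have hitting $k$-cliques with respect to $\mathcal{R}_1$ and hitting $k$-cliques with respect to $\mathcal{R}_2$ (for these $k,m$). Then for $\mathcal{R} = \mathcal{R}_1 \cup \mathcal{R}_2$ it holds that $m_{\mathcal{R}}(k) \leq m$.
   Context: For a finite set $V \subset \mathbb{R}^2$ and a family $\mathcal{R}$ of subsets of $\mathbb{R}^2$ (ranges), $\mathcal{H}(V,\mathcal{R},m)$ is the hypergraph on $V$ whose hyperedges are the sets $V \cap R$, $R \in \mathcal{R}$, of size exactly $m$. A coloring $c\colon V \to [k]$ is polychromatic if every hyperedge contains a vertex of each of the $k$ colors. Point sets are in general position (pairwise distinct $x$-coordinates, $y$-coordinates, and values $x+y$). $m_{\mathcal{R}}(k)$ is the smallest $m$ such that for every finite $V \subset \mathbb{R}^2$ in general position, $\mathcal{H}(V,\mathcal{R},m)$ admits a polychromatic $k$-coloring ($\infty$ if none exists). For fixed $k,m,\mathcal{R}$ we say we have hitting $k$-cliques if for every finite $V \subset \mathbb{R}^2$ there exist pairwise disjoint $k$-element subsets of $V$ such that every hyperedge of $\mathcal{H}(V,\mathcal{R},m)$ fully contains at least one of these subsets. *)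

(* Defs.v *)
From HB Require Import structures.
From mathcomp Require Import all_boot all_order all_algebra.
From mathcomp Require Import finmap.
From mathcomp Require Import boolp classical_sets reals.
Set Implicit Arguments. Unset Strict Implicit. Unset Printing Implicit Defensive.
Import Order.TTheory GRing.Theory Num.Theory.

Local Open Scope ring_scope.

Definition plane (R : realType) := (R * R)%type.

Definition general_position (R : realType) (V : {fset plane R}) : Prop :=
  forall p q, p \in V -> q \in V -> p != q ->
    [/\ p.1 != q.1, p.2 != q.2 & p.1 + p.2 != q.1 + q.2].

Definition trace (R : realType) (V : {fset plane R}) (Rg : set (plane R))
  : {fset plane R} := [fset x in V | `[< Rg x >]]%fset.

Definition hyperedge (R : realType) (Rs : set (set (plane R))) (m : nat)
  (V : {fset plane R}) (E : {fset plane R}) : Prop :=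
  exists Rg, Rs Rg /\ E = trace V Rg /\ #|` E|%fset = m.

Definition polychromatic (R : realType) (k : nat) (Rs : set (set (plane R)))
  (m : nat) (V : {fset plane R}) (c : plane R -> 'I_k) : Prop :=
  forall E, hyperedge Rs m V E ->
    forall i : 'I_k, exists2 x, x \in E & c x = i.

Definition admits_polychromatic (R : realType) (Rs : set (set (plane R)))
  (k m : nat) : Prop :=
  forall V : {fset plane R}, general_position V ->
    exists c : plane R -> 'I_k, polychromatic Rs m V c.

(* m_Rs(k) <= m, i.e. the smallest m' with the above property exists and is
   at most m *)
Definition mR_le (R : realType) (Rs : set (set (plane R))) (k m : nat) : Prop :=
  exists m' : nat, (m' <= m)%N /\ admits_polychromatic Rs k m'.

Definition hitting_cliques (R : realType) (Rs : set (set (plane R)))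
  (k m : nat) : Prop :=
  forall V : {fset plane R},
    exists C : {fset {fset plane R}},
      (forall A, A \in C -> fsubset A V /\ #|` A|%fset = k) /\
      (forall A B, A \in C -> B \in C -> A != B -> fdisjoint A B) /\
      (forall E, hyperedge Rs m V E -> exists2 A, A \in C & fsubset A E).

(* Main.v *)
Require Import Defs.
From HB Require Import structures.
From mathcomp Require Import all_boot all_order all_algebra.
From mathcomp Require Import finmap.
From mathcomp Require Import boolp classical_sets reals.
Set Implicit Arguments. Unset Strict Implicit. Unset Printing Implicit Defensive.
Local Open Scope fset_scope.

Definition kproper (T : choiceType) k (r1 r2 : T -> T -> Prop) (S : {fset T}) (c : T -> 'I_k) :=
  forall z w, z \in S -> w \in S -> (r1 z w \/ r2 z w) -> c z = c w -> z = w.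
Definition kmissing (T : choiceType) k (r : T -> T -> Prop) (S : {fset T}) (c : T -> 'I_k) x i :=
  forall z, z \in S -> r x z -> c z != i.
Definition symr (T : Type) (r : T -> T -> Prop) := forall x y, r x y -> r y x.
Definition transr (T : Type) (r : T -> T -> Prop) := forall x y z, r x y -> r y z -> r x z.

Lemma kempe (T : choiceType) k (r1 r2 : T -> T -> Prop) (S : {fset T}) (c : T -> 'I_k) x a b :
  (forall x y, r1 x y -> r1 y x) -> (forall x y z, r1 x y -> r1 y z -> r1 x z) ->
  (forall x y, r2 x y -> r2 y x) -> (forall x y z, r2 x y -> r2 y z -> r2 x z) ->
  kproper r1 r2 S c -> kmissing r1 S c x a -> kmissing r2 S c x b ->
  exists c', [/\ kproper r1 r2 S c', kmissing r1 S c' x a & kmissing r2 S c' x a].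
Proof.
move=> s1 t1 s2 t2 pc m1 m2.
have [ex|nex] := pselect (exists y, [/\ y \in S, r2 x y & c y = a]); last first.
  exists c; split => //; move=> z zS rz; apply/eqP => cz; apply: nex; by exists z.
have [y [yS rxy cy]] := ex.
have ab : a != b by rewrite -cy; apply: m2.
pose g z := if c z == a then xget z [set w | [/\ w \in S, r1 z w & c w = b]]
            else if c z == b then xget z [set w | [/\ w \in S, r2 z w & c w = a]] else z.
have G1 : forall z, g z != z ->
   (c z = a /\ [/\ g z \in S, r1 z (g z) & c (g z) = b]) \/
   (c z = b /\ [/\ g z \in S, r2 z (g z) & c (g z) = a]).
  move=> z; rewrite /g; case: (eqVneq (c z) a) => [cza|_].
    by case: (xgetP z [set w | [/\ w \in S, r1 z w & c w = b]]) => [w _ Pw|_]; [left|rewrite eqxx].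
  case: (eqVneq (c z) b) => [czb|_]; last by rewrite eqxx.
  by case: (xgetP z [set w | [/\ w \in S, r2 z w & c w = a]]) => [w _ Pw|_]; [right|rewrite eqxx].
have G3 : forall z w, z \in S -> c z = a -> w \in S -> r1 z w -> c w = b -> g z = w.
  move=> z w zS cz wS rzw cw; rewrite /g cz eqxx.
  have := @xgetI _ z [set w | [/\ w \in S, r1 z w & c w = b]] w.
  set u := xget _ _ => /(_ (And3 wS rzw cw)) [uS ru cu].
  apply: pc => //; first by left; apply: t1 _ _ _ (s1 _ _ ru) rzw.
  by rewrite cu cw.
have G4 : forall z w, z \in S -> c z = b -> w \in S -> r2 z w -> c w = a -> g z = w.
  move=> z w zS cz wS rzw cw; rewrite /g cz eq_sym (negbTE ab) eqxx.
  have := @xgetI _ z [set w | [/\ w \in S, r2 z w & c w = a]] w.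
  set u := xget _ _ => /(_ (And3 wS rzw cw)) [uS ru cu].
  apply: pc => //; first by right; apply: t2 _ _ _ (s2 _ _ ru) rzw.
  by rewrite cu cw.
pose K z := exists i, iter i g y = z.
have K1 : forall z, K z -> z \in S /\ (c z = a \/ c z = b).
  move=> z [i <-]; elim: i => [|i [IS IC]] /=; first by split; [|left].
  have [/eqP ->|/G1] := boolP (g (iter i g y) == iter i g y); first by split.
  by case=> [[_ [? _ ->]]|[_ [? _ ->]]]; split=> //; [right|left].
have K2 : forall z, K z -> z = y \/ exists u, [/\ K u, g u = z & u != z].
  move=> z [i <-]; elim: i => [|i IH] /=; first by left.
  have [/eqP ->|ne] := boolP (g (iter i g y) == iter i g y); first exact: IH.
  by right; exists (iter i g y); split => //; [exists i|rewrite eq_sym].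
have Ky : K y by exists 0%N.
have Kg : forall u, K u -> K (g u) by move=> u [i <-]; exists i.+1.
have K3 : forall u v, K u -> v \in S -> c u != c v -> (c v = a \/ c v = b) ->
    (r1 u v \/ r2 u v) -> K v.
  move=> u v Ku vS cuv cv r.
  have [uS cu] := K1 u Ku.
  case: cu cv cuv => [cu [cv|cv]|cu [cv|cv]]; rewrite ?cu ?cv ?eqxx // => _.
  - case: r => r.
      by rewrite -(G3 u v) //; apply: Kg.
    case: (K2 u Ku) => [eu|[u' [Ku' gu' ne]]].
      by rewrite eu in r; move: (m2 v vS (t2 _ _ _ rxy r)); rewrite cv eqxx.
    have [u'S _] := K1 u' Ku'.
    have : g u' != u' by rewrite gu' eq_sym.
    move/G1; rewrite gu' => -[[_ [_ _ cub]]|[cu' [_ r' _]]].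
      by move: cub; rewrite cu => /eqP; rewrite (negbTE ab).
    suff -> : v = u' by [].
    apply: pc => //; first by right; apply: t2 _ _ _ (s2 _ _ r) (s2 _ _ r').
    by rewrite cv cu'.
  - case: r => r; last by rewrite -(G4 u v) //; apply: Kg.
    case: (K2 u Ku) => [eu|[u' [Ku' gu' ne]]].
      by move: cu; rewrite eu cy => /eqP; rewrite (negbTE ab).
    have [u'S _] := K1 u' Ku'.
    have : g u' != u' by rewrite gu' eq_sym.
    move/G1; rewrite gu' => -[[cu' [_ r' _]]|[_ [_ _ cua]]]; last first.
      by move: cua; rewrite cu => /eqP; rewrite eq_sym (negbTE ab).
    suff -> : v = u' by [].
    apply: pc => //; first by left; apply: t1 _ _ _ (s1 _ _ r) (s1 _ _ r').
    by rewrite cv cu'.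
pose sw (i : 'I_k) := if i == a then b else if i == b then a else i.
have swK : forall i, sw (sw i) = i.
  move=> i; rewrite /sw; case: (eqVneq i a) => [->|ia]; first by rewrite eq_sym (negbTE ab) eqxx.
  case: (eqVneq i b) => [->|ib]; first by rewrite eqxx.
  by rewrite (negbTE ia) (negbTE ib).
have swa : sw a = b by rewrite /sw eqxx.
have swb : sw b = a by rewrite /sw eq_sym (negbTE ab) eqxx.
pose c' z := if `[< K z >] then sw (c z) else c z.
have cK : forall z, K z -> c' z = sw (c z) by move=> z Kz; rewrite /c'; case: asboolP.
have cNK : forall z, ~ K z -> c' z = c z by move=> z Kz; rewrite /c'; case: asboolP.
exists c'; split.
- move=> z w zS wS r.
  have mix : forall z w, z \in S -> w \in S -> (r1 z w \/ r2 z w) -> K z -> ~ K w ->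
      c' z = c' w -> z = w.
    move=> z0 w0 z0S w0S r0 Kz Kw; rewrite cK // cNK // => e.
    exfalso; apply: Kw.
    have [_ [cz|cz]] := K1 z0 Kz; rewrite cz ?swa ?swb in e; apply: (K3 z0) => //;
      rewrite ?cz -?e; by [left|right|rewrite ab|rewrite eq_sym ab].
  have [Kz|nKz] := pselect (K z); have [Kw|nKw] := pselect (K w).
  + by rewrite !cK // => e; apply: pc => //; rewrite -[c z]swK e swK.
  + exact: mix.
  + move=> e; symmetry; apply: mix => //; by case: r; [left; apply: s1|right; apply: s2].
  + by rewrite !cNK //; apply: pc.
- move=> z zS rz; have [Kz|Kz] := pselect (K z); last by rewrite cNK //; apply: m1.
  rewrite cK //; have [_ [cz|cz]] := K1 z Kz; rewrite cz ?swa ?swb; first by rewrite eq_sym.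
  case: (K2 z Kz) => [ez|[u' [Ku' gu' ne]]].
    by move: cz; rewrite ez cy => /eqP; rewrite (negbTE ab).
  have [u'S _] := K1 u' Ku'.
  have : g u' != u' by rewrite gu' eq_sym.
  move/G1; rewrite gu' => -[[cu' [_ r' _]]|[_ [_ _ cza]]]; last first.
    by move: cza; rewrite cz => /eqP; rewrite eq_sym (negbTE ab).
  by move: (m1 u' u'S (t1 _ _ _ rz (s1 _ _ r'))); rewrite cu' eqxx.
- move=> z zS rz; have [Kz|Kz] := pselect (K z).
    rewrite cK //; have [_ [cz|cz]] := K1 z Kz; rewrite cz ?swa ?swb; first by rewrite eq_sym.
    by move: (m2 z zS rz); rewrite cz eqxx.
  rewrite cNK //; apply/eqP => cz; apply: Kz.
  suff -> : z = y by [].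
  apply: pc => //; first by right; apply: t2 _ _ _ (s2 _ _ rz) rxy.
  by rewrite cz cy.
Qed.
Definition relC (T : choiceType) (C : {fset {fset T}}) (z w : T) : Prop :=
  exists2 A, A \in C & (z \in A) && (w \in A).
Definition disjC (T : choiceType) (C : {fset {fset T}}) : Prop :=
  forall A B, A \in C -> B \in C -> A != B -> [disjoint A & B].

Lemma disjC_eq (T : choiceType) (C : {fset {fset T}}) A B x :
  disjC C -> A \in C -> B \in C -> x \in A -> x \in B -> A = B.
Proof.
move=> d AC BC xA xB; apply/eqP; apply/negPn/negP => ne.
by move/fdisjointP: (d A B AC BC ne) => /(_ x xA); rewrite xB.
Qed.

Lemma relC_sym (T : choiceType) (C : {fset {fset T}}) x y : relC C x y -> relC C y x.
Proof. by case=> A AC /andP[? ?]; exists A => //; apply/andP. Qed.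

Lemma relC_trans (T : choiceType) (C : {fset {fset T}}) x y z :
  disjC C -> relC C x y -> relC C y z -> relC C x z.
Proof.
move=> d [A AC /andP[xA yA]] [B BC /andP[yB zB]].
rewrite (disjC_eq d AC BC yA yB) in xA; exists B => //; exact/andP.
Qed.

Lemma extend (T : choiceType) k (r1 r2 : T -> T -> Prop) (S : {fset T}) (c : T -> 'I_k) (x : T) (a : 'I_k) :
  (forall x y : T, r1 x y -> r1 y x) -> (forall x y : T, r2 x y -> r2 y x) ->
  kproper r1 r2 S c -> kmissing r1 S c x a -> kmissing r2 S c x a ->
  kproper r1 r2 (x |` S) (fun z => if z == x then a else c z).
Proof.
move=> s1 s2 pc m1 m2.
have key : forall w, w \in S -> (r1 x w \/ r2 x w) -> a = c w -> False.
  move=> w wS [r|r] e; [move: (m1 w wS r)|move: (m2 w wS r)]; by rewrite e eqxx.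
move=> z w; rewrite !in_fset1U.
case: (eqVneq z x) => [->|zx]; case: (eqVneq w x) => [->|wx] //= zS wS r e.
- by exfalso; apply: (key w wS r e).
- exfalso; apply: (key z zS _ (esym e)).
  by case: r => r; [left; apply: s1|right; apply: s2].
- exact: pc.
Qed.

Lemma miss_ex (T : choiceType) k (C : {fset {fset T}}) S (c : T -> 'I_k) x :
  (0 < k)%N -> (forall A, A \in C -> #|` A| = k) -> disjC C -> x \notin S ->
  exists i, kmissing (relC C) S c x i.
Proof.
move=> k0 sz d xS.
have [[A AC xA]|nA] := pselect (exists2 A, A \in C & x \in A); last first.
  exists (Ordinal k0) => z zS [B BC /andP[xB _]]; exfalso; apply: nA; by exists B.
pose s := [seq c z | z <- enum_fset (A `\ x)].
have [[i ni]|ni] := pselect (exists i, i \notin s); last first.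
  exfalso.
  have : (size (enum 'I_k) <= size s)%N.
    apply: uniq_leq_size; first exact: enum_uniq.
    move=> i _; apply/negPn/negP => H; apply: ni; by exists i.
  rewrite size_enum_ord size_map.
  have := cardfsD1 x A; rewrite xA sz // => ->.
  by rewrite add1n ltnn.
exists i => z zS [B BC /andP[xB zB]].
rewrite -(disjC_eq d AC BC xA xB) in zB.
apply: contra ni => /eqP <-; apply: map_f.
rewrite in_fsetD1 zB andbT; apply: contraNneq xS => <-; exact: zS.
Qed.

Lemma color_all (T : choiceType) k (C1 C2 : {fset {fset T}}) :
  (0 < k)%N -> (forall A, A \in C1 -> #|` A| = k) -> disjC C1 ->
  (forall A, A \in C2 -> #|` A| = k) -> disjC C2 ->
  forall n (S : {fset T}), #|` S| = n -> exists c : T -> 'I_k, kproper (relC C1) (relC C2) S c.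
Proof.
move=> k0 sz1 d1 sz2 d2; elim=> [|n IH] S cS.
  exists (fun _ => Ordinal k0) => z; by rewrite (cardfs0_eq cS) inE.
have : S != fset0 by rewrite -cardfs_gt0 cS.
case/fset0Pn => x xS.
have cS' : #|` S `\ x| = n by move: (cardfsD1 x S); rewrite xS cS add1n => -[].
have [c pc] := IH _ cS'.
have xS' : x \notin S `\ x by rewrite fsetD11.
have [a ma] := miss_ex c k0 sz1 d1 xS'.
have [b mb] := miss_ex c k0 sz2 d2 xS'.
have [c' [pc' ma1 ma2]] := kempe (@relC_sym _ C1) (fun x y z => @relC_trans _ C1 x y z d1)
   (@relC_sym _ C2) (fun x y z => @relC_trans _ C2 x y z d2) pc ma mb.
exists (fun z => if z == x then a else c' z).
rewrite -(fsetD1K xS); apply: extend => //; [exact: relC_sym|exact: relC_sym].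
Qed.

Lemma rainbow (T : choiceType) k (A : {fset T}) (c : T -> 'I_k) (i : 'I_k) :
  #|` A| = k -> {in A &, injective c} -> exists2 x, x \in A & c x = i.
Proof.
move=> cA inj.
have [//|nx] := pselect (exists2 x, x \in A & c x = i).
exfalso.
have : (size (i :: [seq c z | z <- enum_fset A]) <= size (enum 'I_k))%N.
  apply: uniq_leq_size; last by move=> j _; rewrite mem_enum.
  rewrite /= map_inj_in_uniq ?fset_uniq // andbT.
  apply/mapP => -[z zA e]; apply: nx; by exists z.
by rewrite /= size_map cA size_enum_ord ltnn.
Qed.

Theorem theorem2 (R : realType) (Rs1 Rs2 : set (set (plane R))) (k m : nat) :
  (0 < k)%N -> (0 < m)%N ->
  hitting_cliques Rs1 k m -> hitting_cliques Rs2 k m ->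
  mR_le (fun Rg => Rs1 Rg \/ Rs2 Rg) k m.
Proof.
move=> k0 m0 h1 h2; exists m; split => //; move=> V _.
have [C1 [sC1 [dC1 hC1]]] := h1 V.
have [C2 [sC2 [dC2 hC2]]] := h2 V.
have sz1 : forall A, A \in C1 -> #|` A| = k by move=> A /sC1 [].
have sz2 : forall A, A \in C2 -> #|` A| = k by move=> A /sC2 [].
have [c pc] := color_all k0 sz1 dC1 sz2 dC2 (erefl #|` V|).
exists c => E hE i.
have [A AC AE] : exists2 A, (A \in C1 \/ A \in C2) & fsubset A E.
  case: hE => Rg [[R1|R2] rest].
    have [A AC AE] := hC1 E (ex_intro _ Rg (conj R1 rest)); exists A => //; by left.
  have [A AC AE] := hC2 E (ex_intro _ Rg (conj R2 rest)); exists A => //; by right.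
have [AV cA] : fsubset A V /\ #|` A| = k by case: AC => [/sC1|/sC2].
have [x xA cx] : exists2 x, x \in A & c x = i.
  apply: rainbow cA _ => z w zA wA; apply: pc; try exact: (fsubsetP AV).
  by case: AC => AC; [left|right]; exists A => //; apply/andP.
by exists x => //; apply: (fsubsetP AE).
Qed.
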